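(* Let $(W,S)$ be a Coxeter system of rank $n$, $(s_1,\dots,s_n)$ an ordering of $S$; let $F_n$ be free on $f_1,\dots,f_n$, $g=f_1\cdots f_n$, $R$ the set of conjugates of $f_1,\dots,f_n$, $\pi:F_n\to W$ the morphism $f_i\mapsto s_i$, and $H\le B_n$ the stabilizer of $(s_1,\dots,s_n)\in W^n$ under the Hurwitz action. Then for every $\beta\in H$ and every $\tilde a\in[1,g]_R$ we have $\pi(\beta\star\tilde a)=\pi(\tilde a)$.
   Context: A Coxeter system $(W,S)$: $W=\langle S\mid (ss')^{m(s,s')}=1\text{ whenever } m(s,s')\neq\infty\rangle$ with $m$ symmetric, $m(s,s)=1$, $m(s,s')\in\{2,3,\dots,\infty\}$ for $s\neq s'$. For a group $G$ with generating set $X$: $\ell_X(a)$ is the minimal $k$ with $a=x_1\cdots x_k$, $x_i\in X\cup X^{-1}$; $a\le_X b$ iff $\ell_X(a)+\ell_X(a^{-1}b)=\ell_X(b)$; $[1,b]_X=\{a:a\le_Xb\}$. The Hurwitz action of $B_n$ on $G^n$: $\sigma_i\cdot(g_1,\dots,g_n)=(g_1,\dots,g_{i-1},g_ig_{i+1}g_i^{-1},g_i,g_{i+2},\dots,g_n)$. The action $\star$ of $B_n$ on $F_n$ by automorphisms is determined by $\sigma_i\star f_i=f_{i+1}$, $\sigma_i\star f_{i+1}=f_{i+1}^{-1}f_if_{i+1}$, $\sigma_i\star f_j=f_j$ for $j\notin\{i,i+1\}$. *)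

(* Defs.v *)
(* Free group F_n, Coxeter group W and braid group B_n are
   handled through words: elements of F_n are words over the letters
   f_i^{+-1} (i : 'I_n) up to free equivalence; W is the group presented by
   (s_i s_j)^{m(i,j)} (finite m), i.e. words up to free reduction and
   insertion/deletion of relators; braids are words in sigma_i^{+-1}. *)
From Stdlib Require Import Relations.
From HB Require Import structures.
From mathcomp Require Import all_boot.
Set Implicit Arguments. Unset Strict Implicit. Unset Printing Implicit Defensive.

(* a letter (i, false) is f_i, (i, true) is f_i^{-1} *)
Definition letter (n : nat) := ('I_n * bool)%type.
Definition word (n : nat) := seq (letter n).

Definition inv_letter n (x : letter n) : letter n := (x.1, ~~ x.2).
Definition winv n (w : word n) : word n := rev (map (@inv_letter n) w).
Definition gen n (i : 'I_n) : word n := [:: (i, false)].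

Inductive free_step n : word n -> word n -> Prop :=
| FreeStep (u v : word n) (x : letter n) :
    free_step (u ++ v) (u ++ [:: x; inv_letter x] ++ v).

Definition feq n : relation (word n) := clos_refl_sym_trans _ (@free_step n).

(* Coxeter matrix: None encodes m = infinity *)
Definition coxeter_matrix n (m : 'I_n -> 'I_n -> option nat) : Prop :=
  (forall i j, m i j = m j i) /\
  (forall i, m i i = Some 1) /\
  (forall i j, i != j -> forall k, m i j = Some k -> 2 <= k).

Definition relator n (i j : 'I_n) (k : nat) : word n :=
  flatten (nseq k [:: (i, false); (j, false)]).

Inductive cox_step n (m : 'I_n -> 'I_n -> option nat) : word n -> word n -> Prop :=
| CoxFree (u v : word n) : free_step u v -> cox_step m u v
| CoxRel (u v : word n) (i j : 'I_n) (k : nat) :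
    m i j = Some k -> cox_step m (u ++ v) (u ++ relator i j k ++ v).

(* coxeq m u v  <->  pi(u) = pi(v) in W, where pi : F_n -> W, f_i |-> s_i *)
Definition coxeq n (m : 'I_n -> 'I_n -> option nat) : relation (word n) :=
  clos_refl_sym_trans _ (@cox_step n m).

(* R = conjugates of the f_i; elements of R \cup R^{-1} are conjugates of
   f_i^{+-1}, encoded by (w, x) |-> w x w^{-1} *)
Definition conj_elt n (c : word n * letter n) : word n := c.1 ++ [:: c.2] ++ winv c.1.

Definition Rprod n (a : word n) (k : nat) : Prop :=
  exists l : seq (word n * letter n),
    size l = k /\ feq a (flatten (map (@conj_elt n) l)).

Definition ellR n (a : word n) (k : nat) : Prop :=
  Rprod a k /\ forall j, j < k -> ~ Rprod a j.

Definition in_interval n (a g : word n) : Prop :=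
  exists k1 k2 k3, [/\ ellR a k1, ellR (winv a ++ g) k2, ellR g k3 & k1 + k2 = k3].

Definition cox_elt n : word n := [seq (i, false) | i <- enum 'I_n].

(* index i+1 (only meaningful when i.+1 < n) *)
Definition nxt n (i : 'I_n) : 'I_n :=
  if insub (i.+1) is Some k then k else i.

(* braid letters: (i, false) = sigma_i, (i, true) = sigma_i^{-1},
   acting on positions i, i+1 (0-based); valid if i.+1 < n *)
Definition bletter (n : nat) := ('I_n * bool)%type.
Definition valid_braid n (b : seq (bletter n)) := all (fun x : bletter n => (val x.1).+1 < n) b.

Definition star_gen n (b : bletter n) (j : 'I_n) : word n :=
  let i := b.1 in
  if ~~ b.2 then
    if j == i then gen (nxt i)
    else if val j == i.+1 then [:: (j, true); (i, false); (j, false)]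
    else gen j
  else
    if val j == i.+1 then gen i
    else if j == i then [:: (i, false); (nxt i, false); (i, true)]
    else gen j.

Definition star_letter n (b : bletter n) (x : letter n) : word n :=
  if x.2 then winv (star_gen b x.1) else star_gen b x.1.

Definition star_step n (b : bletter n) (a : word n) : word n :=
  flatten (map (star_letter b) a).

Definition star n (beta : seq (bletter n)) (a : word n) : word n :=
  foldr (@star_step n) a beta.

Definition hur_step n (b : bletter n) (t : 'I_n -> word n) : 'I_n -> word n :=
  let i := b.1 in
  fun k =>
  if ~~ b.2 then
    if k == i then t i ++ t (nxt i) ++ winv (t i)
    else if val k == i.+1 then t i
    else t k
  else
    if k == i then t (nxt i)
    else if val k == i.+1 then winv (t (nxt i)) ++ t i ++ t (nxt i)
    else t k.

Definition hurwitz n (beta : seq (bletter n)) (t : 'I_n -> word n) : 'I_n -> word n :=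
  foldr (@hur_step n) t beta.

(* Main.v *)
Require Import Defs.
From Stdlib Require Import Relations.
From HB Require Import structures.
From mathcomp Require Import all_boot.
Set Implicit Arguments. Unset Strict Implicit. Unset Printing Implicit Defensive.

Section S.
Variable n : nat.
Implicit Types (u v w p q : word n) (f g t : 'I_n -> word n).

Definition sl f (x : letter n) : word n := if x.2 then winv (f x.1) else f x.1.
Definition subst f w : word n := flatten (map (sl f) w).

Lemma inv_letterK : involutive (@inv_letter n).
Proof. by case=> a b; rewrite /inv_letter /= negbK. Qed.

Lemma winv_cat u v : winv (u ++ v) = winv v ++ winv u.
Proof. by rewrite /winv map_cat rev_cat. Qed.

Lemma winvK : involutive (@winv n).
Proof. by move=> u; rewrite /winv map_rev revK (mapK inv_letterK). Qed.

Lemma winv_cons x u : winv (x :: u) = winv u ++ [:: inv_letter x].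
Proof. by rewrite /winv /= rev_cons cats1. Qed.

Lemma subst_cat f u v : subst f (u ++ v) = subst f u ++ subst f v.
Proof. by rewrite /subst map_cat flatten_cat. Qed.

Lemma subst_gen1 f i : subst f (gen i) = f i.
Proof. by rewrite /subst /= cats0. Qed.

Lemma sl_inv f x : sl f (inv_letter x) = winv (sl f x).
Proof. by case: x => a [] //=; rewrite /sl /= winvK. Qed.

Lemma subst_winv f w : subst f (winv w) = winv (subst f w).
Proof.
elim: w => [|x w IH] //=; rewrite winv_cons subst_cat IH.
rewrite /subst /= cats0 -/(subst f w) winv_cat sl_inv //.
Qed.

Lemma subst_comp f g w : subst f (subst g w) = subst (fun k => subst f (g k)) w.
Proof.
elim: w => [|x w IH] //=.
rewrite /subst /= -!/(subst _ _) subst_cat IH; congr (_ ++ _).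
by rewrite /sl; case: x.2; rewrite ?subst_winv.
Qed.

Lemma subst_gen w : subst (@gen n) w = w.
Proof. elim: w => [|[a [] ] w IH] //=; by rewrite /subst /= -/(subst _ w) IH. Qed.

Lemma subst_ext f g w : (forall k, f k = g k) -> subst f w = subst g w.
Proof. by move=> e; rewrite /subst; congr flatten; apply: eq_map => x; rewrite /sl e. Qed.

Lemma rst_cong (R : relation (word n)) :
  (forall p q u v, R u v -> R (p ++ u ++ q) (p ++ v ++ q)) ->
  forall p q u v, clos_refl_sym_trans _ R u v ->
    clos_refl_sym_trans _ R (p ++ u ++ q) (p ++ v ++ q).
Proof.
move=> H p q u v; elim=> {u v}.
- by move=> u v /(H p q) h; apply: rst_step.
- by move=> u; apply: rst_refl.
- by move=> u v _ h; apply: rst_sym.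
- by move=> u v w _ h1 _ h2; apply: rst_trans h2.
Qed.

Lemma free_cong p q u v : free_step u v -> free_step (p ++ u ++ q) (p ++ v ++ q).
Proof.
case=> u0 v0 x.
have -> : p ++ (u0 ++ v0) ++ q = (p ++ u0) ++ (v0 ++ q) by rewrite !catA.
have -> : p ++ (u0 ++ [:: x; inv_letter x] ++ v0) ++ q =
   (p ++ u0) ++ [:: x; inv_letter x] ++ (v0 ++ q) by rewrite !catA.
by constructor.
Qed.

Lemma cox_cong m p q u v : cox_step m u v -> cox_step m (p ++ u ++ q) (p ++ v ++ q).
Proof.
case.
- by move=> u0 v0 /(free_cong p q) h; apply: CoxFree.
- move=> u0 v0 i j k e.
  have -> : p ++ (u0 ++ v0) ++ q = (p ++ u0) ++ (v0 ++ q) by rewrite !catA.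
  have -> : p ++ (u0 ++ relator i j k ++ v0) ++ q =
   (p ++ u0) ++ relator i j k ++ (v0 ++ q) by rewrite !catA.
  by apply: CoxRel e.
Qed.

Lemma feq_cong p q u v : feq u v -> feq (p ++ u ++ q) (p ++ v ++ q).
Proof. exact: rst_cong free_cong p q u v. Qed.

Lemma coxeq_cong m p q u v : coxeq m u v -> coxeq m (p ++ u ++ q) (p ++ v ++ q).
Proof. exact: rst_cong (@cox_cong m) p q u v. Qed.

Lemma feq_cox m u v : feq u v -> coxeq m u v.
Proof.
elim=> {u v}.
- by move=> u v h; apply: rst_step; apply: CoxFree.
- by move=> u; apply: rst_refl.
- by move=> u v _ h; apply: rst_sym.
- by move=> u v w _ h1 _ h2; apply: rst_trans h2.
Qed.

Lemma feq_cancel x v : feq (x :: inv_letter x :: v) v.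
Proof. apply: rst_sym; apply: rst_step; exact: (FreeStep [::] v x). Qed.

Lemma feq_cons x u v : feq u v -> feq (x :: u) (x :: v).
Proof. by move=> h; have := feq_cong [:: x] [::] h; rewrite !cats0. Qed.

Lemma feq_cat u u' v v' : feq u u' -> feq v v' -> feq (u ++ v) (u' ++ v').
Proof.
move=> h1 h2; apply: (@rst_trans _ _ _ (u' ++ v)).
  by have := feq_cong [::] v h1.
by have := feq_cong u' [::] h2; rewrite !cats0.
Qed.

Lemma feq_winv_r w : feq (w ++ winv w) [::].
Proof.
elim: w => [|x w IH] /=; first exact: rst_refl.
rewrite winv_cons catA.
have := feq_cong [:: x] [:: inv_letter x] IH => /= h.
apply: rst_trans h _; exact: feq_cancel.
Qed.

Lemma feq_winv_l w : feq (winv w ++ w) [::].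
Proof. by have := feq_winv_r (winv w); rewrite winvK. Qed.

Lemma subst_feq f u v : feq u v -> feq (subst f u) (subst f v).
Proof.
elim=> {u v}.
- move=> u v [u0 v0 x]; rewrite !subst_cat.
  have -> : subst f [:: x; inv_letter x] = sl f x ++ winv (sl f x).
    by rewrite /subst /= cats0 sl_inv.
  apply: rst_sym.
  have := feq_cong (subst f u0) (subst f v0) (feq_winv_r (sl f x)); exact.
- by move=> u; apply: rst_refl.
- by move=> u v _ h; apply: rst_sym.
- by move=> u v w _ h1 _ h2; apply: rst_trans h2.
Qed.

Lemma coxeq_winv m u v : coxeq m u v -> coxeq m (winv u) (winv v).
Proof.
move=> h.
apply: (@rst_trans _ _ _ (winv u ++ v ++ winv v)).
  have := feq_cong (winv u) [::] (rst_sym _ _ _ _ (feq_winv_r v)).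
  rewrite !cats0 => h'; exact: feq_cox h'.
apply: (@rst_trans _ _ _ (winv u ++ u ++ winv v)).
  by apply: rst_sym; apply: coxeq_cong.
rewrite catA; have := feq_cong [::] (winv v) (feq_winv_l u) => /= h'.
exact: feq_cox h'.
Qed.

Lemma coxeq_cat m u u' v v' : coxeq m u u' -> coxeq m v v' -> coxeq m (u ++ v) (u' ++ v').
Proof.
move=> h1 h2; apply: (@rst_trans _ _ _ (u' ++ v)).
  by have := coxeq_cong [::] v h1.
by have := coxeq_cong u' [::] h2; rewrite !cats0.
Qed.

Lemma subst_coxeq m f g w : (forall k, coxeq m (f k) (g k)) ->
  coxeq m (subst f w) (subst g w).
Proof.
move=> H; elim: w => [|x w IH]; first exact: rst_refl.
rewrite /subst /= -!/(subst _ _); apply: coxeq_cat => //.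
by rewrite /sl; case: x.2; [apply: coxeq_winv|]; apply: H.
Qed.

Lemma subst_feq_ext f g w : (forall k, feq (f k) (g k)) ->
  feq (subst f w) (subst g w).
Proof.
move=> H; elim: w => [|x w IH]; first exact: rst_refl.
rewrite /subst /= -!/(subst _ _); apply: feq_cat => //.
rewrite /sl; case: x.2; last exact: H.
have h := H x.1; set a := f x.1 in h *; set b := g x.1 in h *.
apply: (@rst_trans _ _ _ (winv a ++ b ++ winv b)).
  by have := feq_cong (winv a) [::] (rst_sym _ _ _ _ (feq_winv_r b)); rewrite !cats0.
apply: (@rst_trans _ _ _ (winv a ++ a ++ winv b)).
  by apply: rst_sym; apply: feq_cong.
by rewrite catA; have := feq_cong [::] (winv b) (feq_winv_l a).
Qed.

Lemma hur_gen b t k : hur_step b t k = subst t (hur_step b (@gen n) k).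
Proof.
rewrite /hur_step; case: b => i [];
repeat case: ifP => _; rewrite ?subst_cat ?subst_winv ?subst_gen1 // ?winvK.
all: try (rewrite /subst /=; done).
Qed.

Lemma nxt_val (i : 'I_n) : i.+1 < n -> val (nxt i) = i.+1.
Proof. by move=> h; rewrite /nxt insubT. Qed.

Lemma key (b : bletter n) k : (val b.1).+1 < n ->
  feq (subst (hur_step b (@gen n)) (star_gen b k)) (gen k).
Proof.
case: b => i c /= hi; have hv := nxt_val hi.
have ne : (nxt i == i) = false.
  by apply/negbTE; apply/eqP => e; move: hv; rewrite e => /eqP; rewrite ltn_eqF.
have kv : forall k : 'I_n, (val k == i.+1) = (k == nxt i).
  by move=> k'; rewrite -hv; apply/eqP/eqP => [|->//]; apply: val_inj.
case: c; rewrite /star_gen /=.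
- rewrite kv; case: ifP => [/eqP -> | hk].
    by rewrite subst_gen1 /hur_step /= eqxx; apply: rst_refl.
  case: ifP => [/eqP -> | hk2].
    rewrite /subst /hur_step /= /sl /= eqxx ne kv eqxx /=.
    apply: (@rst_trans _ _ _ [:: (i,false); (nxt i,false); inv_letter (nxt i,false)]); first exact: feq_cancel.
    apply: feq_cons; exact: feq_cancel.
  rewrite subst_gen1 /hur_step /= hk2 kv hk; apply: rst_refl.
- case: ifP => [/eqP -> | hk].
    by rewrite subst_gen1 /hur_step /= ne kv eqxx; apply: rst_refl.
  rewrite kv; case: ifP => [/eqP -> | hk2].
    rewrite /subst /hur_step /= /sl /= eqxx ne kv eqxx /=.
    apply: (@rst_trans _ _ _ [:: (nxt i,false); inv_letter (i,false); (i,false)]); first exact: (feq_cancel (i,true)).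
    apply: feq_cons; exact: (feq_cancel (i,true)).
  rewrite subst_gen1 /hur_step /= hk kv hk2; apply: rst_refl.
Qed.

Lemma main_feq (beta : seq (bletter n)) a : valid_braid beta ->
  feq (subst (hurwitz beta (@gen n)) (star beta a)) a.
Proof.
elim: beta a => [|b beta IH] a.
  by rewrite /hurwitz /star /= subst_gen => _; apply: rst_refl.
move=> hv; have /andP [hb hbeta] : ((val b.1).+1 < n) && valid_braid beta by exact hv.
have E : forall w, subst (hurwitz (b :: beta) (@gen n)) w =
   subst (hurwitz beta (@gen n)) (subst (hur_step b (@gen n)) w).
  move=> w; rewrite subst_comp; apply: subst_ext => k.
  by rewrite /hurwitz /= hur_gen.
have -> : star (b :: beta) a = subst (star_gen b) (star beta a) by [].
rewrite E [subst (hur_step _ _) _]subst_comp.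
apply: (@rst_trans _ _ _ (subst (hurwitz beta (@gen n)) (star beta a))) ; last exact: IH.
apply: subst_feq.
apply: (@rst_trans _ _ _ (subst (@gen n) (star beta a))); last by rewrite subst_gen; apply: rst_refl.
by apply: subst_feq_ext => k; apply: key.
Qed.

End S.

Theorem proposition4p8 (n : nat) (m : 'I_n -> 'I_n -> option nat)
  (hm : coxeter_matrix m)
  (beta : seq ('I_n * bool)) (hbeta : valid_braid beta)
  (hH : forall k : 'I_n, coxeq m (hurwitz beta (@gen n) k) (gen k))
  (a : word n) (ha : in_interval a (cox_elt n)) :
  coxeq m (star beta a) a.
Proof.
apply: (@rst_trans _ _ _ (subst (hurwitz beta (@gen n)) (star beta a))).
  apply: rst_sym; rewrite -{2}(subst_gen (star beta a)); exact: subst_coxeq.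
exact/feq_cox/main_feq.
Qed.
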